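(* Let $G$, $H$, the supervisors with $\Sigma_{o,i},\Sigma_{c,i},N_{o,i}$, a controllable event $\sigma\in\Sigma_c$, $N=\max\{N_{o,i}:i\in I^c(\sigma)\}$, and the verifiers $V^k_\sigma$ with reachable state sets $X^k_\sigma$ be as in the context. Then for every $k\in\{0,1,\dots,N-1\}$ the following are equivalent: (a) for every $s\in\mathcal{L}(H)$ with $|s|=k$, if $s\sigma\in\mathcal{L}(G)\setminus\mathcal{L}(H)$ then for every $(s_i)_{i\in I^c(\sigma)}\in\mathcal{T}^{\sigma}_{conf}(s)$ there exists $i\in I^c(\sigma)$ with $s_i\sigma\notin\mathcal{L}(H^{aug}_{N_{o,i}})$; (b) there is no state $(q,(q_i)_{i\in I^c(\sigma)},k)\in X^k_\sigma$ with $\sigma\in\Gamma(q)\setminus\Gamma_H(q)$ and $\sigma\in\Gamma^{aug}_{H,N_{o,i}}(q_i)$ for all $i\in I^c(\sigma)$.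
   Context: $G=(Q,\Sigma,\delta,\Gamma,q_0,Q_m)$ is a deterministic finite automaton (transition function extended to strings; $\Gamma(q)$ = set of events defined at $q$; $\mathcal{L}(G)$ its generated language). $H=(Q_H,\Sigma,\delta_H,\Gamma_H,q_0,Q_{m,H})$ is a sub-automaton of $G$ (obtained by deleting states of $G$ and their attached transitions). For a string $s$, $|s|$ is its length, $s_{-m}$ is its prefix of length $\max\{0,|s|-m\}$, $\Sigma^{\le M}$ is the set of strings of length at most $M$. Supervisors $I=\{1,\dots,n\}$: supervisor $i$ has observable events $\Sigma_{o,i}$, $\Sigma_{uo,i}=\Sigma\setminus\Sigma_{o,i}$, controllable events $\Sigma_{c,i}$, delay bound $N_{o,i}\in\mathbb{N}$; $\Sigma_c=\bigcup_i\Sigma_{c,i}$, $I^c(\sigma)=\{i:\sigma\in\Sigma_{c,i}\}$. $P_i$ is natural projection onto $\Sigma_{o,i}^*$; $\Theta_i^{N_{o,i}}(s)=\{P_i(s_{-m}):0\le m\le N_{o,i}\}$. For $s\in\mathcal{L}(H)$, $\mathcal{T}^\sigma_{conf}(s)$ is the set of tuples $(s_i)_{i\in I^c(\sigma)}$ with $P_i(s_i)\in\Theta_i^{N_{o,i}}(s)$ for all $i\in I^c(\sigma)$. Augmented automaton $H^{aug}_N$: states $Q_H\cup\{q_{dis}\}$, initial state $q_0$; for $q\in Q_H$, $e\in\Sigma$: $\delta^{aug}(q,e)=\delta_H(q,e)$ if $e\in\Gamma_H(q)$, $=q_{dis}$ if $e\notin\Gamma_H(q)$ and $e\in\Gamma_H(\delta_H(q,s'))$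 for some $s'\in\Sigma^{\le N}$ with $\delta_H(q,s')$ defined, undefined otherwise; $q_{dis}$ has no outgoing transitions; $\Gamma^{aug}_{H,N}(q)$ is the set of events defined at $q$ in $H^{aug}_N$. Verifier $V^k_\sigma$ ($0\le k\le N-1$): states are tuples $(q,(q_i)_{i\in I^c(\sigma)},d)$ with $q,q_i\in Q_H$, $d\in[0,k]$; initial state $(q_0,(q_0)_{i},0)$. At a state $(q,(q_i)_i,d)$ and for $e\in\Sigma$, each $i\in I^c(\sigma)$ falls in one case: C1: $k-d>N_{o,i}$, $e\in\Sigma_{o,i}$; C2: $k-d>N_{o,i}$, $e\in\Sigma_{uo,i}$; C3: $k-d\le N_{o,i}$, $\sigma\notin\Gamma^{aug}_{H,N_{o,i}}(q_i)$, $e\in\Sigma_{o,i}$; C4: $k-d\le N_{o,i}$, $\sigma\notin\Gamma^{aug}_{H,N_{o,i}}(q_i)$, $e\in\Sigma_{uo,i}$; C5: $k-d\le N_{o,i}$, $\sigma\in\Gamma^{aug}_{H,N_{o,i}}(q_i)$. Type-1 transition: if $d+1\le k$, $\delta_H(q,e)$ is defined, and $\delta_H(q_i,e)$ is defined for every $i$ in case C1 or C3, there is a transition to $(\delta_H(q,e),(q_i')_i,d+1)$ where $q_i'=\delta_H(q_i,e)$ for $i$ in C1 or C3 and $q_i'=q_i$ for $i$ in C2, C4 or C5. Type-2 transition: for each $i$ in case C2 or C4 with $\delta_H(q_i,e)$ defined, there is a transition to the state obtained by replacing $q_i$ by $\delta_H(q_i,e)$ (all other components, including $q$ and $d$, unchanged).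 $X^k_\sigma$ is the set of states reachable from the initial state. *)

(* Defs.v *)
From mathcomp Require Import all_boot.
Set Implicit Arguments. Unset Strict Implicit. Unset Printing Implicit Defensive.

Fixpoint run (S Sigma : Type) (t : S -> Sigma -> option S) (x : S) (s : seq Sigma)
  : option S :=
  match s with
  | [::] => Some x
  | e :: s' => match t x e with Some y => run t y s' | None => None end
  end.

Section Automata.
Variables (Q Sigma : finType).

Definition sub_delta (delta : Q -> Sigma -> option Q) (QH : {set Q})
  (q : Q) (e : Sigma) : option Q :=
  if q \in QH then
    match delta q e with
    | Some q' => if q' \in QH then Some q' else None
    | None => None
    end
  else None.

Definition enabled (t : Q -> Sigma -> option Q) (q : Q) (e : Sigma) : bool :=
  isSome (t q e).

Definition enabled_within (t : Q -> Sigma -> option Q) (N : nat) (q : Q)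
  (e : Sigma) : bool :=
  [exists m : 'I_N.+1, exists w : m.-tuple Sigma,
     match run t q w with Some q' => enabled t q' e | None => false end].

(* Augmented automaton H^aug_N: states are Some q (q in Q_H) and None = q_dis. *)
Definition aug_delta (dH : Q -> Sigma -> option Q) (N : nat)
  (x : option Q) (e : Sigma) : option (option Q) :=
  match x with
  | None => None
  | Some q =>
      match dH q e with
      | Some q' => Some (Some q')
      | None => if enabled_within dH N q e then Some None else None
      end
  end.

Definition aug_Gamma (dH : Q -> Sigma -> option Q) (N : nat) (q : Q) (e : Sigma)
  : bool := isSome (aug_delta dH N (Some q) e).

Definition proj (A : {set Sigma}) (s : seq Sigma) : seq Sigma :=
  [seq e <- s | e \in A].

Definition in_Theta (A : {set Sigma}) (Nb : nat) (s u : seq Sigma) : Prop :=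
  exists m, m <= Nb /\ u = proj A (take (size s - m) s).

Section Verifier.
Variables (dH : Q -> Sigma -> option Q) (q0 : Q) (n : nat)
  (So Sc : 'I_n -> {set Sigma}) (No : 'I_n -> nat) (sigma : Sigma) (k : nat).

Definition moves_obs (qs : 'I_n -> Q) (d : nat) (i : 'I_n) (e : Sigma) : bool :=
  [&& sigma \in Sc i, e \in So i &
      (No i < k - d) || ~~ aug_Gamma dH (No i) (qs i) sigma].

Definition moves_unobs (qs : 'I_n -> Q) (d : nat) (i : 'I_n) (e : Sigma) : bool :=
  [&& sigma \in Sc i, e \notin So i &
      (No i < k - d) || ~~ aug_Gamma dH (No i) (qs i) sigma].

(* Reachable states X^k_sigma of V^k_sigma. The family (q_i)_{i in I^c(sigma)}
   is encoded as a function 'I_n -> Q; components outside I^c(sigma) stay q0. *)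
Inductive vreach : Q -> ('I_n -> Q) -> nat -> Prop :=
| vr_init : vreach q0 (fun _ => q0) 0
| vr_type1 q qs d e q' qs' :
    vreach q qs d -> d.+1 <= k -> dH q e = Some q' ->
    (forall i, if moves_obs qs d i e then dH (qs i) e = Some (qs' i)
               else qs' i = qs i) ->
    vreach q' qs' d.+1
| vr_type2 q qs d e i r :
    vreach q qs d -> moves_unobs qs d i e -> dH (qs i) e = Some r ->
    vreach q (fun j => if j == i then r else qs j) d.
End Verifier.
End Automata.

(* Main.v *)
Require Import Defs.
From mathcomp Require Import all_boot zify.
Set Implicit Arguments. Unset Strict Implicit. Unset Printing Implicit Defensive.

Lemma run_cat (S T : Type) (t : S -> T -> option S) x a b :
  run t x (a ++ b) = match run t x a with Some y => run t y b | None => None end.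
Proof. elim: a x => //= e a IH x; case: (t x e) => //. Qed.

Lemma run_rcons (S T : Type) (t : S -> T -> option S) x a e :
  run t x (rcons a e) = match run t x a with Some y => t y e | None => None end.
Proof. rewrite -cats1 run_cat; case: run => //= y; by case: (t y e). Qed.

Section Basic.
Variables (Q Sigma : finType).

Lemma run_sub (delta : Q -> Sigma -> option Q) QH x w y :
  run (sub_delta delta QH) x w = Some y -> run delta x w = Some y.
Proof.
elim: w x => //= e w IH x; rewrite {1}/sub_delta.
case: (x \in QH) => //; case: (delta x e) => [z|] //; case: (z \in QH) => //; exact: IH.
Qed.

Lemma run_aug (dH : Q -> Sigma -> option Q) N x w y :
  run dH x w = Some y -> run (aug_delta dH N) (Some x) w = Some (Some y).
Proof.
elim: w x => [x [->] //|e w IH x]; cbn [run].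
case E: (dH x e) => [z|] // H.
have -> : aug_delta dH N (Some x) e = Some (Some z) by rewrite /aug_delta E.
exact: IH.
Qed.

Lemma run_aug_inv (dH : Q -> Sigma -> option Q) N x w sg :
  isSome (run (aug_delta dH N) (Some x) (rcons w sg)) ->
  exists y, run dH x w = Some y /\ aug_Gamma dH N y sg.
Proof.
elim: w x => [x|e w IH x]; cbn [run rcons].
  move=> H; exists x; split => //; rewrite /aug_Gamma; move: H.
  by case: (aug_delta dH N (Some x) sg).
case E: (aug_delta dH N (Some x) e) => [[z|]|] //=.
  move/IH=> [y [Hy Hg]]; exists y; split => //.
  by move: E; rewrite /aug_delta; case: (dH x e) => [?|] //; [case=> -> | case: enabled_within].
by case: w {IH} => //= ? ?.
Qed.
End Basic.

Section Dir1.
Variables (Q Sigma : finType) (dH : Q -> Sigma -> option Q) (q0 : Q) (n : nat)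
  (So Sc : 'I_n -> {set Sigma}) (No : 'I_n -> nat) (sigma : Sigma) (k : nat).

Lemma reach_strings q qs d :
  vreach dH q0 So Sc No sigma k q qs d ->
  d <= k /\ exists s, size s = d /\ run dH q0 s = Some q /\
  exists ss : 'I_n -> seq Sigma, forall i, sigma \in Sc i ->
    run dH q0 (ss i) = Some (qs i) /\
    (proj (So i) (ss i) = proj (So i) s \/
     exists j, [/\ j <= d, k - j <= No i, aug_Gamma dH (No i) (qs i) sigma &
                proj (So i) (ss i) = proj (So i) (take j s)]).
Proof.
elim=> {q qs d}.
- split => //; exists [::]; split => //; split => //; exists (fun _ => [::]) => i _.
  by split => //; left.
- move=> q qs d e q' qs' _ [Hdk [s [Hs [Hq [ss Hss]]]]] Hd Hq' Hqs'.
  split => //; exists (rcons s e); split; first by rewrite size_rcons Hs.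
  split; first by rewrite run_rcons Hq.
  exists (fun i => if moves_obs dH So Sc No sigma k qs d i e then rcons (ss i) e else ss i).
  move=> i Hi; have [Hr Hp] := Hss i Hi; have := Hqs' i.
  case M: (moves_obs dH So Sc No sigma k qs d i e); move=> He.
  + move: M; rewrite /moves_obs Hi /= => /andP [Heo Hc].
    split; first by rewrite run_rcons Hr.
    case: Hp => [Hp|[j [Hj Hkj Ha Hp]]].
    * by left; rewrite /proj !filter_rcons Heo -/(proj _ _) Hp.
    * exfalso; move: Hc; rewrite Ha orbF; lia.
  + rewrite He; split => //.
    have Htk : forall j, j <= d -> take j (rcons s e) = take j s.
      by move=> j Hj; rewrite -cats1 takel_cat // Hs.
    case Heo: (e \in So i).
    * move: M; rewrite /moves_obs Hi Heo /= => /negbT; rewrite negb_or -leqNgt negbK => /andP [Hk Ha].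
      right; case: Hp => [Hp|[j [Hj Hkj _ Hp]]].
      -- exists d; split => //; rewrite -Hs -cats1 take_size_cat //.
      -- exists j; split => //; first lia. by rewrite Htk.
    * case: Hp => [Hp|[j [Hj Hkj Ha Hp]]].
      -- by left; rewrite /proj filter_rcons Heo -/(proj _ _).
      -- right; exists j; split => //; first lia. by rewrite Htk.
- move=> q qs d e i r _ [Hdk [s [Hs [Hq [ss Hss]]]]] Hm Hr.
  split => //; exists s; split => //; split => //.
  exists (fun j => if j == i then rcons (ss i) e else ss j) => j Hj.
  case: eqP => [Eji|_]; last by have := Hss j Hj.
  subst j; have [Hri Hp] := Hss i Hj.
  move: Hm; rewrite /moves_unobs => /and3P [_ Heo Hc].
  split; first by rewrite run_rcons Hri.
  case: Hp => [Hp|[j' [Hj' Hkj Ha Hp]]].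
  + by left; rewrite /proj filter_rcons (negbTE Heo) -/(proj _ _).
  + exfalso; move: Hc; rewrite Ha orbF; lia.
Qed.
End Dir1.

Section Dir2.
Variables (Q Sigma : finType) (dH : Q -> Sigma -> option Q) (q0 : Q) (n : nat)
  (So Sc : 'I_n -> {set Sigma}) (No : 'I_n -> nat) (sigma : Sigma) (k : nat).
Variables (s : seq Sigma) (ss : 'I_n -> seq Sigma) (qf : Q).
Hypothesis Hs : size s = k.
Hypothesis Hrun : run dH q0 s = Some qf.
Hypothesis Hss : forall i, sigma \in Sc i -> exists qi j,
  [/\ run dH q0 (ss i) = Some qi, aug_Gamma dH (No i) qi sigma, j <= k,
      k - j <= No i & proj (So i) (ss i) = proj (So i) (take j s)].

Local Notation VR := (vreach dH q0 So Sc No sigma k).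

Definition frozen i x d := (k - d <= No i) && aug_Gamma dH (No i) x sigma.
Definition weak i x d := exists p, run dH q0 (take p (ss i)) = Some x /\
  proj (So i) (take p (ss i)) = proj (So i) (take d s).
Definition strong i x d := exists p, [/\ run dH q0 (take p (ss i)) = Some x,
  proj (So i) (take p (ss i)) = proj (So i) (take d s) &
  forall e r, drop p (ss i) = e :: r -> e \in So i].
Definition Inv (b : 'I_n -> bool) qs d := forall i, sigma \in Sc i ->
  frozen i (qs i) d \/ (if b i then strong i (qs i) d else weak i (qs i) d).

Lemma strong_weak i x d : strong i x d -> weak i x d.
Proof. by case=> p [H1 H2 _]; exists p. Qed.

Lemma proj_take_le (A : {set Sigma}) j d : j <= d ->
  exists t, proj A (take d s) = proj A (take j s) ++ t.
Proof.
move=> Hjd; exists (proj A (drop j (take d s))).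
by rewrite /proj -filter_cat -{1}(cat_take_drop j (take d s)) take_takel.
Qed.

Lemma finish i p x d j : run dH q0 (take p (ss i)) = Some x ->
  proj (So i) (take p (ss i)) = proj (So i) (take d s) ->
  (forall e r, drop p (ss i) = e :: r -> e \in So i) ->
  j <= d -> proj (So i) (ss i) = proj (So i) (take j s) ->
  take p (ss i) = ss i.
Proof.
move=> Hx Hp Hst Hjd Hj.
case E: (drop p (ss i)) => [|e r].
  by have := cat_take_drop p (ss i); rewrite E cats0.
have He := Hst e r E.
have H : proj (So i) (ss i) = proj (So i) (take p (ss i)) ++ proj (So i) (drop p (ss i)).
  by rewrite /proj -filter_cat cat_take_drop.
have [t Ht] := proj_take_le (So i) Hjd.
move: H; rewrite Hj E Hp Ht /proj /= He => /(f_equal size); rewrite !size_cat /=; lia.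
Qed.

Lemma advance i x d p j qi e : d < k -> e = nth sigma s d -> e \in So i ->
  d < j -> j <= k ->
  run dH q0 (take p (ss i)) = Some x ->
  proj (So i) (take p (ss i)) = proj (So i) (take d s) ->
  (forall e r, drop p (ss i) = e :: r -> e \in So i) ->
  proj (So i) (ss i) = proj (So i) (take j s) ->
  run dH q0 (ss i) = Some qi ->
  exists y, [/\ dH x e = Some y, run dH q0 (take p.+1 (ss i)) = Some y &
    proj (So i) (take p.+1 (ss i)) = proj (So i) (take d.+1 s)].
Proof.
move=> Hdk He Heo Hdj Hjk Hx Hp Hst Hj Hqi.
have Htd : take d.+1 s = rcons (take d s) e by rewrite He (take_nth sigma) // Hs.
have [t Ht] := proj_take_le (So i) Hdj.
have H : proj (So i) (ss i) = proj (So i) (take p (ss i)) ++ proj (So i) (drop p (ss i)).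
  by rewrite /proj -filter_cat cat_take_drop.
rewrite Hj Ht Htd Hp /proj filter_rcons Heo -cats1 -catA /= in H.
have H2 := f_equal (drop (size (proj (So i) (take d s)))) H.
rewrite /proj in H2; rewrite !drop_size_cat // in H2.
case E: (drop p (ss i)) H2 => [|e' r] //= H2.
have He' := Hst e' r E.
rewrite He' in H2; case: H2 => Ee _; subst e'.
have Hlt : p < size (ss i).
  by have := f_equal size E; rewrite size_drop /=; lia.
have Hn : nth sigma (ss i) p = e.
  by have := drop_nth sigma Hlt; rewrite E => -[].
have Htp : take p.+1 (ss i) = rcons (take p (ss i)) e by rewrite (take_nth sigma) // Hn.
have Hq2 : run dH q0 (take p (ss i) ++ drop p (ss i)) = Some qi by rewrite cat_take_drop.
rewrite run_cat Hx E /= in Hq2.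
move: Hq2; case Ey: (dH x e) => [y|] // _.
exists y; split => //; first by rewrite Htp run_rcons Hx.
by rewrite Htp Htd /proj !filter_rcons Heo -!/(proj _ _) Hp.
Qed.


Lemma consume i d q qs : sigma \in Sc i -> VR q qs d ->
  frozen i (qs i) d \/ weak i (qs i) d ->
  exists qs', [/\ VR q qs' d, (forall j, j != i -> qs' j = qs j) &
    frozen i (qs' i) d \/ strong i (qs' i) d].
Proof.
move=> Hsc Hv [Hf|[p [Hx Hp]]].
  by exists qs; split => //; left.
have [qi [jj [Hqi _ _ _ _]]] := Hss Hsc.
suff: forall m p qs, size (ss i) - p <= m -> VR q qs d ->
  run dH q0 (take p (ss i)) = Some (qs i) ->
  proj (So i) (take p (ss i)) = proj (So i) (take d s) ->
  exists qs', [/\ VR q qs' d, (forall j, j != i -> qs' j = qs j) &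
    frozen i (qs' i) d \/ strong i (qs' i) d].
  by move/(_ _ p qs (leqnn _) Hv Hx Hp).
elim=> [|m IH] {}p {Hv Hx Hp}qs Hm Hv Hx Hp.
all: case: (boolP (frozen i (qs i) d)) => Hf; first by exists qs; split => //; left.
all: case E: (drop p (ss i)) => [|e r].
all: try by exists qs; split => //; right; exists p; split => // ? ?; rewrite E.
  by have := f_equal size E; rewrite size_drop /=; lia.
case Heo: (e \in So i).
  by exists qs; split => //; right; exists p; split => // ? ?; rewrite E => -[<- _].
have Hq2 : run dH q0 (take p (ss i) ++ drop p (ss i)) = Some qi by rewrite cat_take_drop.
rewrite run_cat Hx E /= in Hq2.
move: Hq2; case Ey: (dH (qs i) e) => [y|] // _.
have Hlt : p < size (ss i).
  by have := f_equal size E; rewrite size_drop /=; lia.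
have Hn : nth sigma (ss i) p = e.
  by have := drop_nth sigma Hlt; rewrite E => -[].
have Htp : take p.+1 (ss i) = rcons (take p (ss i)) e by rewrite (take_nth sigma) // Hn.
have Hv' : VR q (fun j => if j == i then y else qs j) d.
  apply: vr_type2 Hv _ Ey.
  rewrite /moves_unobs Hsc Heo /=.
  by move: Hf; rewrite /frozen negb_and -ltnNge.
have Hm' : size (ss i) - p.+1 <= m by lia.
have Hx' : run dH q0 (take p.+1 (ss i)) = Some ((fun j => if j == i then y else qs j) i).
  by rewrite Htp run_rcons Hx eqxx.
have Hp' : proj (So i) (take p.+1 (ss i)) = proj (So i) (take d s).
  by rewrite Htp /proj filter_rcons Heo.
have [qs'' [H1 H2 H3]] := IH p.+1 _ Hm' Hv' Hx' Hp'.
exists qs''; split => // j Hj; rewrite H2 //=; by rewrite (negbTE Hj).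
Qed.

Lemma consume_all d q qs : VR q qs d -> Inv (fun _ => false) qs d ->
  exists qs', VR q qs' d /\ Inv (fun _ => true) qs' d.
Proof.
move=> Hv Hinv.
suff: forall m, exists qs', VR q qs' d /\ Inv (fun i : 'I_n => i < m) qs' d.
  by move=> /(_ n) [qs' [H1 H2]]; exists qs'; split => // i Hi; have := H2 i Hi; rewrite ltn_ord.
elim=> [|m [qs' [Hv' Hinv']]].
  by exists qs; split => // i Hi; have := Hinv i Hi; rewrite ltn0.
have keep : forall qs'' : 'I_n -> Q, (forall j, nat_of_ord j != m -> qs'' j = qs' j) ->
  forall j, sigma \in Sc j -> nat_of_ord j != m ->
  frozen j (qs'' j) d \/ (if j < m.+1 then strong j (qs'' j) d else weak j (qs'' j) d).
  move=> qs'' Hq j Hj Hjm; rewrite Hq // ltnS leq_eqVlt (negbTE Hjm) /=.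
  exact: Hinv' j Hj.
case: (ltnP m n) => Hmn; last first.
  exists qs'; split => // j Hj; have := Hinv' j Hj.
  have Hjm : j < m := leq_trans (ltn_ord j) Hmn.
  by rewrite Hjm ltnS (ltnW Hjm).
set i0 := Ordinal Hmn.
case: (boolP (sigma \in Sc i0)) => Hsc; last first.
  exists qs'; split => // j Hj; apply: keep => //.
  apply/eqP => Ej; have Eij : i0 = j by apply: val_inj; rewrite /= Ej.
  by move: Hsc; rewrite Eij Hj.
have Hfw : frozen i0 (qs' i0) d \/ weak i0 (qs' i0) d.
  have := Hinv' i0 Hsc; rewrite /= ltnn; by [].
have [qs'' [H1 H2 H3]] := consume Hsc Hv' Hfw.
exists qs''; split => // j Hj.
case: (eqVneq (nat_of_ord j) m) => Ejm.
  have -> : j = i0 by apply: val_inj.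
  by rewrite /= ltnSn; case: H3; [left | right].
apply: keep => // j' Hj'; apply: H2; apply/eqP => E; move: Hj'; by rewrite E eqxx.
Qed.

Lemma reach_all d : d <= k -> exists q qs,
  [/\ run dH q0 (take d s) = Some q, VR q qs d & Inv (fun _ => true) qs d].
Proof.
elim: d => [_|d IH Hdk].
  have H0 : Inv (fun _ => false) (fun _ => q0) 0.
    move=> i _; right; exists 0; by rewrite !take0.
  have [qs' [H1 H2]] := @consume_all 0 q0 (fun _ => q0) (vr_init dH q0 So Sc No sigma k) H0.
  by exists q0, qs'; rewrite take0.
have [q [qs [Hq Hv Hinv]]] := IH (ltnW Hdk).
set e := nth sigma s d.
have Htd : take d.+1 s = rcons (take d s) e by rewrite (take_nth sigma) // Hs.
have Hr2 : run dH q0 (take d.+1 s ++ drop d.+1 s) = Some qf by rewrite cat_take_drop.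
rewrite run_cat in Hr2.
move: Hr2; case Eq' : (run dH q0 (take d.+1 s)) => [q'|] // _.
have Hq' : dH q e = Some q' by move: Eq'; rewrite Htd run_rcons Hq.
have Hmove : forall i, moves_obs dH So Sc No sigma k qs d i e ->
  exists y p, [/\ dH (qs i) e = Some y, run dH q0 (take p (ss i)) = Some y &
    proj (So i) (take p (ss i)) = proj (So i) (take d.+1 s)].
  move=> i; rewrite /moves_obs => /and3P [Hsc Heo Hc].
  have [Hf|[p [Hx Hp Hst]]] := Hinv i Hsc.
    by move: Hf Hc; rewrite /frozen => /andP [H1 ->]; rewrite orbF; lia.
  have [qi [jj [Hqi Ha Hjk Hkj Hj]]] := Hss Hsc.
  case: (ltnP d jj) => Hdj.
    have [y [H1 H2 H3]] := advance Hdk erefl Heo Hdj Hjk Hx Hp Hst Hj Hqi.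
    by exists y, p.+1.
  have Ht := finish Hx Hp Hst Hdj Hj.
  move: Hx; rewrite Ht Hqi => -[Ex]; subst qi.
  by move: Hc; rewrite Ha orbF; lia.
pose qs' i := if moves_obs dH So Sc No sigma k qs d i e
  then odflt (qs i) (dH (qs i) e) else qs i.
have Hv' : VR q' qs' d.+1.
  apply: vr_type1 Hv Hdk Hq' _ => i; rewrite /qs'.
  case M: (moves_obs dH So Sc No sigma k qs d i e) => //.
  by have [y [p [-> _ _]]] := Hmove i M.
have Hinv' : Inv (fun _ => false) qs' d.+1.
  move=> i Hsc; rewrite /qs'.
  case M: (moves_obs dH So Sc No sigma k qs d i e).
    have [y [p [Ey H1 H2]]] := Hmove i M.
    by right; exists p; rewrite Ey.
  have [Hf|[p [Hx Hp Hst]]] := Hinv i Hsc.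
    by left; move: Hf; rewrite /frozen => /andP [H1 ->]; rewrite andbT; lia.
  case Heo: (e \in So i).
    move: M; rewrite /moves_obs Hsc Heo /= => /negbT.
    by rewrite negb_or -leqNgt negbK /frozen => /andP [H1 ->]; left; rewrite andbT; lia.
  right; exists p; split => //; by rewrite Htd /proj filter_rcons Heo.
have [qs'' [H1 H2]] := consume_all Hv' Hinv'.
by exists q', qs''.
Qed.

Lemma final : exists q qs, [/\ run dH q0 s = Some q, VR q qs k &
  forall i, sigma \in Sc i -> aug_Gamma dH (No i) (qs i) sigma].
Proof.
have [q [qs [Hq Hv Hinv]]] := reach_all (leqnn k).
exists q, qs; split => //; first by rewrite -Hs take_size in Hq.
move=> i Hsc; have [Hf|[p [Hx Hp Hst]]] := Hinv i Hsc.
  by case/andP: Hf.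
have [qi [jj [Hqi Ha Hjk Hkj Hj]]] := Hss Hsc.
have Ht := finish Hx Hp Hst Hjk Hj.
by move: Hx; rewrite Ht Hqi => -[<-].
Qed.

End Dir2.

Theorem proposition1 (Q Sigma : finType) (delta : Q -> Sigma -> option Q)
  (q0 : Q) (QH : {set Q}) (n : nat) (So Sc : 'I_n -> {set Sigma})
  (No : 'I_n -> nat) (sigma : Sigma) :
  q0 \in QH ->
  (exists i, sigma \in Sc i) ->
  forall k : nat, k < \max_(i | sigma \in Sc i) No i ->
  let dH := sub_delta delta QH in
  (forall s : seq Sigma,
      isSome (run dH q0 s) -> size s = k ->
      isSome (run delta q0 (rcons s sigma)) ->
      ~~ isSome (run dH q0 (rcons s sigma)) ->
      forall ss : 'I_n -> seq Sigma,
        (forall i, sigma \in Sc i ->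
           in_Theta (So i) (No i) s (proj (So i) (ss i))) ->
        exists i, sigma \in Sc i /\
          ~~ isSome (run (aug_delta dH (No i)) (Some q0) (rcons (ss i) sigma)))
  <->
  ~ (exists (q : Q) (qs : 'I_n -> Q),
       vreach dH q0 So Sc No sigma k q qs k /\
       isSome (delta q sigma) /\ ~~ isSome (dH q sigma) /\
       (forall i, sigma \in Sc i -> aug_Gamma dH (No i) (qs i) sigma)).
Proof.
move=> Hq0 _ k _ dH; split.
- move=> HA [q [qs [Hv [Hd [Hnd Ha]]]]].
  have [_ [s [Hs [Hq [ss Hss]]]]] := reach_strings Hv.
  have Hrd : isSome (run delta q0 (rcons s sigma)) by rewrite run_rcons (run_sub Hq).
  have Hrn : ~~ isSome (run dH q0 (rcons s sigma)) by rewrite run_rcons Hq.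
  have Hth : forall i, sigma \in Sc i -> in_Theta (So i) (No i) s (proj (So i) (ss i)).
    move=> i Hi; have [_ [Hp|[j [Hj Hkj _ Hp]]]] := Hss i Hi.
      by exists 0; split => //; rewrite subn0 take_size /proj -/(proj _ _) Hp.
    exists (k - j); split => //; rewrite /proj -/(proj _ _) Hp Hs.
    by have -> : k - (k - j) = j by lia.
  have Hsm : isSome (run dH q0 s) by rewrite Hq.
  have [i [Hi Hn]] := HA s Hsm Hs Hrd Hrn ss Hth.
  have [H1 _] := Hss i Hi.
  by move: Hn; rewrite run_rcons (run_aug _ H1); have := Ha i Hi; rewrite /aug_Gamma => ->.
- move=> HB s Hs Hk Hd Hn ss Hth.
  case: (boolP [exists i, (sigma \in Sc i) &&
     ~~ isSome (run (aug_delta dH (No i)) (Some q0) (rcons (ss i) sigma))]).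
    by move/existsP => [i /andP [H1 H2]]; exists i.
  move=> Hall; exfalso; apply: HB.
  have Hall' : forall i, sigma \in Sc i ->
      isSome (run (aug_delta dH (No i)) (Some q0) (rcons (ss i) sigma)).
    by move=> i Hi; move: Hall; rewrite negb_exists => /forallP /(_ i); rewrite Hi negbK.
  move: Hs; case Eqf: (run dH q0 s) => [qf|] // _.
  have Hss : forall i, sigma \in Sc i -> exists qi j,
    [/\ run dH q0 (ss i) = Some qi, aug_Gamma dH (No i) qi sigma, j <= k,
        k - j <= No i & proj (So i) (ss i) = proj (So i) (take j s)].
    move=> i Hi; have [qi [H1 H2]] := run_aug_inv (Hall' i Hi).
    have [m [Hm Hp]] := Hth i Hi.
    exists qi, (k - m); split => //; try lia.
    by rewrite Hp Hk.
  have [q [qs [Hq Hv Ha]]] := @final _ _ dH q0 n So Sc No sigma k s ss qf Hk Eqf Hss.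
  exists q, qs; split => //; split; first by move: Hd; rewrite run_rcons (run_sub Hq).
  by split => //; move: Hn; rewrite run_rcons Hq.
Qed.
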